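(* Let $T$ be the Lr $(\mathbf a,\tau)$ interval exchange transformation and assume $T$ has no periodic points. Then: (i) if $x\ne y$ in $[0,1)$, the pair $\mathcal I(x),\mathcal I(y)$ is neither positively nor negatively asymptotic; (ii) if $x\ne y$ in $(0,1]$, the pair $\tilde{\mathcal I}(x),\tilde{\mathcal I}(y)$ is neither positively nor negatively asymptotic; (iii) if $\alpha\ne\beta$ are points of $X$ with $\alpha\in X_0$, the pair $\alpha,\beta$ is neither positively nor negatively asymptotic; (iv) the maps $\mathcal I$ and $\tilde{\mathcal I}$ are injective.
   Context: Fix $n\ge 2$, $[n]=\{1,\dots,n\}$, a vector $\mathbf a=(a_1,\dots,a_n)$ with all $a_i>0$ and $\sum_i a_i=1$, and a permutation $\tau$ of $[n]$. Put $b_0=0$, $b_i=\sum_{j=1}^i a_j$, $J_i=[b_{i-1},b_i)$, $\tilde J_i=(b_{i-1},b_i]$ for $i\in[n]$, and $D=\{b_1,\dots,b_{n-1}\}$. Put $b^\tau_0=0$, $b^\tau_i=\sum_{j=1}^i a_{\tau^{-1}(j)}$. The Lr $(\mathbf a,\tau)$ interval exchange transformation $T:[0,1)\to[0,1)$ and its dual $\tilde T:(0,1]\to(0,1]$ are defined by $x\mapsto x-b_{i-1}+b^\tau_{\tau(i)-1}$ for $x\in J_i$ (resp. $x\in\tilde J_i$); both are bijections. Let $\Omega=[n]^{\mathbb Z}$ with the product topology and shift $S(\alpha)_i=\alpha_{i+1}$. The itinerary maps are $\mathcal I(x)_k=i\iff T^kx\in J_i$ ($x\in[0,1)$) and $\tilde{\mathcal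 I}(x)_k=i\iff\tilde T^kx\in\tilde J_i$ ($x\in(0,1]$), $k\in\mathbb Z$. Let $D_\infty=\{0,1\}\cup\bigcup_{k\in\mathbb Z}T^k(D)$, $R=[0,1]\setminus D_\infty$, $X_0=\mathcal I(R)$, $X=\overline{X_0}$. Points $\alpha,\beta\in\Omega$ are positively (resp. negatively) asymptotic if there is $N\in\mathbb N$ with $\alpha_i=\beta_i$ for all $i\ge N$ (resp. all $i\le -N$). A periodic point of $T$ is $x$ with $T^kx=x$ for some $k\in\mathbb N$. *)

(* Defs.v *)
From HB Require Import structures.
From mathcomp Require Import all_boot all_order all_algebra all_fingroup.
From mathcomp Require Import reals.
Set Implicit Arguments. Unset Strict Implicit. Unset Printing Implicit Defensive.
Import Order.TTheory GRing.Theory Num.Theory.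
Local Open Scope ring_scope.

(* Letters are 0-based: the paper's letter i in [n] is the ordinal i-1 : 'I_n. *)
Section IET.
Variables (R : realType) (n : nat) (a : 'I_n -> R) (tau : 'S_n).

(* lo i = b_{i-1} (paper, 1-based), hi i = b_i *)
Definition lo (i : 'I_n) : R := \sum_(j < n | (j < i)%N) a j.
Definition hi (i : 'I_n) : R := lo i + a i.
(* lot i = b^tau_{tau(i)-1} = sum of a_j over j with tau j < tau i *)
Definition lot (i : 'I_n) : R := \sum_(j < n | (tau j < tau i)%N) a j.
Definition hit (i : 'I_n) : R := lot i + a i.

Definition T (x : R) : R :=
  match [pick i : 'I_n | (lo i <= x) && (x < hi i)] with
  | Some i => x - lo i + lot i | None => x end.
Definition Tinv (y : R) : R :=
  match [pick i : 'I_n | (lot i <= y) && (y < hit i)] with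
  | Some i => y - lot i + lo i | None => y end.
Definition Td (x : R) : R :=
  match [pick i : 'I_n | (lo i < x) && (x <= hi i)] with
  | Some i => x - lo i + lot i | None => x end.
Definition Tdinv (y : R) : R :=
  match [pick i : 'I_n | (lot i < y) && (y <= hit i)] with
  | Some i => y - lot i + lo i | None => y end.

Definition zpow (f g : R -> R) (k : int) (x : R) : R :=
  match k with Posz m => iter m f x | Negz m => iter m.+1 g x end.
Definition Tk (k : int) (x : R) : R := zpow T Tinv k x.
Definition Tdk (k : int) (x : R) : R := zpow Td Tdinv k x.

(* itineraries; d is an irrelevant default letter (never used on the domains) *)
Definition itin (d : 'I_n) (x : R) : int -> 'I_n := fun k =>
  odflt d [pick i : 'I_n | (lo i <= Tk k x) && (Tk k x < hi i)].
Definition itind (d : 'I_n) (x : R) : int -> 'I_n := fun k =>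
  odflt d [pick i : 'I_n | (lo i < Tdk k x) && (Tdk k x <= hi i)].

Definition Dinf (x : R) : Prop :=
  x = 0 \/ x = 1 \/ exists (k : int) (i : 'I_n), (0 < i)%N /\ x = Tk k (lo i).
Definition Rgood (x : R) : Prop := (0 <= x <= 1) /\ ~ Dinf x.
Definition X0 (d : 'I_n) (al : int -> 'I_n) : Prop :=
  exists x, Rgood x /\ al = itin d x.
(* closure of X0 in the product topology of [n]^Z: every central cylinder
   around al meets X0 *)
Definition X (d : 'I_n) (al : int -> 'I_n) : Prop :=
  forall N : nat, exists x, Rgood x /\
    forall k : int, (absz k <= N)%N -> al k = itin d x k.

Definition no_periodic : Prop :=
  forall x : R, 0 <= x < 1 -> forall k : nat, (0 < k)%N -> iter k T x <> x.
End IET.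

Definition pos_asympt (n : nat) (al be : int -> 'I_n) : Prop :=
  exists N : nat, forall i : int, (N%:Z <= i)%R -> al i = be i.
Definition neg_asympt (n : nat) (al be : int -> 'I_n) : Prop :=
  exists N : nat, forall i : int, (i <= - N%:Z)%R -> al i = be i.

(* Main.v *)
Require Import Defs.
From HB Require Import structures.
From mathcomp Require Import all_boot all_order all_algebra all_fingroup.
From mathcomp Require Import reals.
From mathcomp Require Import lra.
From Stdlib Require Import Classical FunctionalExtensionality.
Set Implicit Arguments. Unset Strict Implicit. Unset Printing Implicit Defensive.
Import Order.TTheory GRing.Theory Num.Theory.
Local Open Scope ring_scope.

Lemma archi_ex (R : realType) (e B : R) : 0 < e -> exists m : nat, B < m%:R * e.
Proof.
move=> e0; have [B0|B0] := leP B 0.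
  by exists 1%N; rewrite mul1r; lra.
exists (Num.Def.trunc (B / e)).+1.
have h0 : 0 <= B / e by rewrite divr_ge0 // ltW.
have /andP[_ h] := truncn_itv h0.
by rewrite -ltr_pdivrMr.
Qed.

Section Core.
Variables (R : realType) (I : finType) (F : R -> R) (P : I -> R -> bool) (c : I -> R).
Hypothesis conv : forall i p q r, P i p -> P i q -> p <= r <= q -> P i r.
Hypothesis tr : forall i z, P i z -> F z = z + c i.
Hypothesis Pb : forall i z, P i z -> 0 <= z <= 1.

Definition same (K : nat) u v :=
  forall m, (m <= K)%N -> exists i, P i (iter m F u) && P i (iter m F v).
Definition samei u v := forall m, exists i, P i (iter m F u) && P i (iter m F v).

Lemma same_sym K u v : same K u v -> same K v u.
Proof. by move=> h m /h [i /andP[h1 h2]]; exists i; rewrite h1 h2. Qed.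

Lemma same_le K K' u v : (K' <= K)%N -> same K u v -> same K' u v.
Proof. by move=> hK h m hm; apply: h; apply: leq_trans hK. Qed.

Lemma transl K u v : u <= v -> same K u v ->
  forall m, (m <= K.+1)%N -> forall z, u <= z <= v -> iter m F z = z + (iter m F u - u).
Proof.
move=> uv hs; elim=> [|m IH] hm z hz /=; first by rewrite addrN addr0.
have hm' : (m <= K)%N by [].
have [i /andP[hu hv]] := hs m hm'.
have hz' := IH (ltnW hm) z hz.
have hv' := IH (ltnW hm) v (ltac:(by rewrite uv lexx)).
have hPz : P i (iter m F z).
  apply: conv hu hv _; rewrite hz' hv'; move/andP: hz => [h1 h2].
  apply/andP; split; lra.
rewrite (tr hPz) (tr hu) hz'; lra.
Qed.
End Core.

Section Core2.
Variables (R : realType) (I : finType) (F : R -> R) (P : I -> R -> bool) (c : I -> R).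
Hypothesis conv : forall i p q r, P i p -> P i q -> p <= r <= q -> P i r.
Hypothesis tr : forall i z, P i z -> F z = z + c i.
Hypothesis Pb : forall i z, P i z -> 0 <= z <= 1.

Lemma samei_same u v K : samei F P u v -> same F P K u v.
Proof. by move=> h m _; apply: h. Qed.

Lemma transli u v : u <= v -> samei F P u v ->
  forall m z, u <= z <= v -> iter m F z = z + (iter m F u - u).
Proof.
move=> uv hs m z hz; apply: (@transl R I F P c conv tr m u v uv) => //.
Qed.

Lemma same_conv K u v z : u <= z <= v -> same F P K u v -> same F P K u z.
Proof.
move=> hz hs m hm.
have uv : u <= v by move/andP: hz => [h1 h2]; apply: le_trans h2.
have [i /andP[hu hv]] := hs m hm.
exists i; rewrite hu /=.
have hz' := @transl R I F P c conv tr K u v uv hs m (leqW hm) z hz.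
have hv' := @transl R I F P c conv tr K u v uv hs m (leqW hm) v (ltac:(by rewrite uv lexx)).
apply: conv hu hv _; rewrite hz' hv'; move/andP: hz => [h1 h2].
apply/andP; split; lra.
Qed.

Lemma same_conv2 K u v z : u <= z <= v -> same F P K u v -> same F P K z v.
Proof.
move=> hz hs m hm.
have uv : u <= v by move/andP: hz => [h1 h2]; apply: le_trans h2.
have [i /andP[hu hv]] := hs m hm.
exists i; rewrite hv andbT.
have hz' := @transl R I F P c conv tr K u v uv hs m (leqW hm) z hz.
have hv' := @transl R I F P c conv tr K u v uv hs m (leqW hm) v (ltac:(by rewrite uv lexx)).
apply: conv hu hv _; rewrite hz' hv'; move/andP: hz => [h1 h2].
apply/andP; split; lra.
Qed.

Lemma core u v : u < v -> samei F P u v ->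
  exists j p, (0 < p)%N /\ iter (p + j) F u = iter j F u.
Proof.
move=> uv hs.
have uv' : u <= v by apply: ltW.
pose t k := iter k F u - u.
have ht : forall m z, u <= z <= v -> iter m F z = z + t m.
  by move=> m z hz; exact: (transli uv' hs).
have yb : forall k, 0 <= iter k F u <= 1.
  by move=> k; have [i /andP[hu _]] := hs k; apply: Pb hu.
have [M hM] := @archi_ex R (v - u) 1 (ltac:(lra)).
have M0 : (0 < M)%N.
  rewrite lt0n; apply/negP => /eqP M0; move: hM; rewrite M0 mul0r; lra.
have M0' : 0 < M%:R :> R by rewrite ltr0n.
pose f (k : 'I_(M.+2)) : 'I_(M.+1) := inord (Num.Def.trunc (M%:R * iter k F u)).
have fK : forall k, (Num.Def.trunc (M%:R * iter k F u) < M.+1)%N.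
  move=> k; rewrite truncn_lt_nat; last by rewrite mulr_ge0 // ?ler0n //; case/andP: (yb k).
  have /andP[_ h] := yb k.
  have : M%:R * iter k F u <= M%:R * 1 by rewrite ler_wpM2l ?ler0n.
  rewrite -natr1; lra.
have : ~~ injectiveb f.
  apply/negP => /injectiveP hi; have := leq_card f hi; rewrite !card_ord.
  by rewrite ltnn.
case/injectivePn => j [k jk fjk].
have tq : Num.Def.trunc (M%:R * iter j F u) = Num.Def.trunc (M%:R * iter k F u).
  by move: fjk; rewrite /f => /(congr1 val); rewrite /= !inordK.
have close : forall a b : nat, Num.Def.trunc (M%:R * iter a F u) = Num.Def.trunc (M%:R * iter b F u) ->
    iter a F u - iter b F u < v - u.
  move=> a b hab.
  have h0a : 0 <= M%:R * iter a F u by rewrite mulr_ge0 ?ler0n //; case/andP: (yb a).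
  have h0b : 0 <= M%:R * iter b F u by rewrite mulr_ge0 ?ler0n //; case/andP: (yb b).
  have /andP[_ ha] := truncn_itv h0a.
  have /andP[hb _] := truncn_itv h0b.
  rewrite hab in ha.
  have : M%:R * (iter a F u - iter b F u) < M%:R * (v - u).
    rewrite mulrBr; move: ha hb hM; rewrite -(natr1 (Num.Def.trunc _)); lra.
  by rewrite ltr_pM2l.
have key : forall j p : nat, (0 < p)%N -> iter (p + j) F u - iter j F u < v - u ->
    iter j F u - iter (p + j) F u < v - u -> iter (p + j) F u = iter j F u.
  move=> j0 p p0 h1 h2.
  pose s := t (p + j0) - t j0.
  have cl : forall m : nat, t (m * p + j0)%N = t j0 + m%:R * s.
    pose z0 := if 0 <= s then u else v.
    have hz0 : u <= z0 <= v by rewrite /z0; case: ifP => _; rewrite ?lexx uv'.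
    have hz0' : u <= z0 + s <= v.
      rewrite /z0 /s /t; case: ifP => hs0; move: hs0 h1 h2; rewrite /s /t; lra.
    elim=> [|m IH]; first by rewrite mul0n add0n mul0r addr0.
    have e1 := ht ((m.+1 * p) + j0)%N z0 hz0.
    have e2 : iter ((m.+1 * p) + j0) F z0 = iter (m * p) F (iter (p + j0) F z0).
      by rewrite -iterD mulSn addnA [(m * p + p)%N]addnC.
    have e3 : iter (p + j0) F z0 = iter j0 F (z0 + s).
      rewrite ht // ht //; rewrite /s; lra.
    have e4 := ht ((m * p) + j0)%N (z0 + s) hz0'.
    rewrite e3 -iterD e4 IH in e2.
    move: e1; rewrite e2 -natr1; lra.
  have bt : forall m, -1 <= t m <= 1.
    by move=> m; rewrite /t; have := yb m; have := yb 0; rewrite /=; lra.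
  have [s0|s0|s0] := ltrgtP s 0.
  - have [m hm] := @archi_ex R (- s) 2 (ltac:(lra)).
    have := bt (m * p + j0)%N; rewrite cl; have := bt j0; lra.
  - have [m hm] := @archi_ex R s 2 s0.
    have := bt (m * p + j0)%N; rewrite cl; have := bt j0; lra.
  - by move: s0; rewrite /s /t; lra.
have [jk'|kj'] := ltnP j k.
- exists j, (k - j)%N; split; first by rewrite subn_gt0.
  apply: key; first by rewrite subn_gt0.
  + by apply: close; rewrite subnK ?(ltnW jk') // tq.
  + by apply: close; rewrite subnK ?(ltnW jk') // tq.
- have kj : (k < j)%N by rewrite ltn_neqAle kj' andbT eq_sym.
  exists k, (j - k)%N; split; first by rewrite subn_gt0.
  apply: key; first by rewrite subn_gt0.
  + by apply: close; rewrite subnK ?(ltnW kj) // tq.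
  + by apply: close; rewrite subnK ?(ltnW kj) // tq.
Qed.
End Core2.

Section Core3.
Variables (R : realType) (I : finType) (F : R -> R) (P : I -> R -> bool) (c : I -> R).
Hypothesis conv : forall i p q r, P i p -> P i q -> p <= r <= q -> P i r.
Hypothesis tr : forall i z, P i z -> F z = z + c i.
Hypothesis Pb : forall i z, P i z -> 0 <= z <= 1.

Lemma interior (G : R -> R) u v z :
  (forall i p q r, P i p -> P i q -> p < r < q -> G r = F r) ->
  u < v -> samei F P u v -> u < z < v ->
  forall j m, iter m G (iter j F z) = iter (m + j) F z.
Proof.
move=> gint uv hs hz j; elim=> [|m IH] //=.
rewrite IH; have [i /andP[hu hv]] := hs (m + j)%N.
have uv' : u <= v by apply: ltW.
have vv : u <= v <= v by rewrite uv' lexx.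
have hz' : u <= z <= v by move/andP: hz => [h1 h2]; rewrite !ltW.
apply: (gint i _ _ _ hu hv).
rewrite (transli conv tr uv' hs _ hz') (transli conv tr uv' hs _ vv).
by move/andP: hz => [h1 h2]; apply/andP; split; lra.
Qed.

Lemma core_int (G : R -> R) u v :
  (forall i p q r, P i p -> P i q -> p < r < q -> G r = F r) ->
  u < v -> samei F P u v ->
  exists y p, (0 < p)%N /\ iter p G y = y /\ exists j, iter j F u < y < iter j F v.
Proof.
move=> gint uv hs.
have [j [p [p0 e]]] := core conv tr Pb uv hs.
pose z := (u + v) / 2.
have hz : u < z < v by rewrite /z; apply/andP; split; lra.
have uv' : u <= v by apply: ltW.
have vv : u <= v <= v by rewrite uv' lexx.
have hz' : u <= z <= v by move/andP: hz => [h1 h2]; rewrite !ltW.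
exists (iter j F z), p; split => //; split.
  rewrite (interior gint uv hs hz) (transli conv tr uv' hs _ hz') e.
  by rewrite (transli conv tr uv' hs _ hz').
exists j; rewrite (transli conv tr uv' hs _ hz') (transli conv tr uv' hs _ vv).
by move/andP: hz => [h1 h2]; apply/andP; split; lra.
Qed.

Lemma contin u :
  (forall m, exists i d, 0 < d /\ forall r, iter m F u - d < r < iter m F u + d -> P i r) ->
  forall m, exists d, 0 < d /\ forall w, u - d < w < u + d -> iter m F w = iter m F u + (w - u).
Proof.
move=> hint; elim=> [|m [d [d0 IH]]].
  by exists 1; split => // w _ /=; lra.
have [i [d' [d0' hi]]] := hint m.
exists (Num.min d d'); split; first by rewrite lt_min d0 d0'.
move=> w hw.
have m1 : Num.min d d' <= d by rewrite ge_min lexx.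
have m2 : Num.min d d' <= d' by rewrite ge_min lexx orbT.
have hd : u - d < w < u + d by move: hw => /andP[h1 h2]; apply/andP; split; lra.
have e1 := IH w hd.
have hPw : P i (iter m F w).
  apply: hi; rewrite e1; move: hw => /andP[h1 h2]; apply/andP; split; lra.
have hPu : P i (iter m F u) by apply: hi; apply/andP; split; lra.
by rewrite /= (tr hPw) (tr hPu) e1; lra.
Qed.
End Core3.

Section Core4.
Variables (R : realType) (I : finType) (F : R -> R) (P : I -> R -> bool) (c : I -> R).
Hypothesis conv : forall i p q r, P i p -> P i q -> p <= r <= q -> P i r.
Hypothesis tr : forall i z, P i z -> F z = z + c i.

Lemma shrink u e : 0 < e -> (forall w, w <> u -> samei F P w u -> False) ->
  exists K, forall w, same F P K w u -> u - e < w < u + e.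
Proof.
move=> e0 np.
have alls : forall w, (forall K, same F P K u w) -> samei F P w u.
  move=> w h m; have [i /andP[h1 h2]] := h m m (leqnn m).
  by exists i; rewrite h1 h2.
case: (classic (forall K, same F P K u (u + e))) => [hp|hp].
  by exfalso; apply: (np (u + e)); [lra | exact: alls].
case: (classic (forall K, same F P K u (u - e))) => [hm|hm].
  by exfalso; apply: (np (u - e)); [lra | exact: alls].
have [K1 h1] := not_all_ex_not _ _ hp.
have [K2 h2] := not_all_ex_not _ _ hm.
apply: NNPP => hn.
have [w hw] := not_all_ex_not _ _ (not_ex_all_not _ _ hn (maxn K1 K2)).
have [hs hw'] := imply_to_and _ _ hw.
have [hlo|hlo] := leP (u + e) w.
  apply: h1; apply: (same_le (leq_maxl K1 K2)).
  apply: (same_conv conv tr (v := w)); last exact: same_sym.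
  by apply/andP; split; lra.
have [hhi|hhi] := leP w (u - e).
  apply: h2; apply: (same_le (leq_maxr K1 K2)); apply: same_sym.
  apply: (same_conv2 conv tr (u := w) (v := u)) => //.
  by apply/andP; split; lra.
by apply: hw'; apply/andP; split; lra.
Qed.
End Core4.


Section Part.
Variables (R : realType) (n : nat) (a : 'I_n -> R) (rho : 'S_n).
Hypothesis ha : forall i, 0 < a i.
Hypothesis hsum : \sum_(i < n) a i = 1.

Definition Lg (i : 'I_n) : R := \sum_(j < n | (rho j < rho i)%N) a j.

Lemma sum_sub (Pp Q : pred 'I_n) i : {subset Pp <= Q} -> ~~ Pp i -> Q i ->
  \sum_(j | Pp j) a j + a i <= \sum_(j | Q j) a j.
Proof.
move=> sPQ nP Qi; rewrite (bigD1 i Qi) /= [X in _ <= X]addrC lerD2r.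
rewrite big_mkcond [X in _ <= X]big_mkcond /=; apply: ler_sum => j _.
case: ifP => Pj; last by case: ifP => _ //; apply: ltW.
have Qj : Q j by apply: sPQ. rewrite Qj /=; case: eqP => // eji; by move: nP; rewrite -eji Pj.
Qed.

Lemma Lg_ge0 i : 0 <= Lg i.
Proof. by apply: sumr_ge0 => j _; apply: ltW. Qed.

Lemma Lg_top i : Lg i + a i <= 1.
Proof. rewrite -hsum; apply: sum_sub => //; by rewrite /= ltnn. Qed.

Lemma Lg_mono i j : (rho i < rho j)%N -> Lg i + a i <= Lg j.
Proof.
move=> hij; apply: sum_sub => //; last by rewrite /= ltnn.
by move=> k /= hk; apply: ltn_trans hk hij.
Qed.

Lemma Lg_uniq i j z : Lg i <= z < Lg i + a i -> Lg j <= z < Lg j + a j -> i = j.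
Proof.
move=> /andP[h1 h2] /andP[h3 h4]; apply/eqP; apply/negP => /negP nij.
have : rho i != rho j by apply: contra nij => /eqP /perm_inj ->.
rewrite neq_ltn => /orP[] hl.
  by have := Lg_mono hl; lra.
by have := Lg_mono hl; lra.
Qed.

Lemma Lg_uniqd i j z : Lg i < z <= Lg i + a i -> Lg j < z <= Lg j + a j -> i = j.
Proof.
move=> /andP[h1 h2] /andP[h3 h4]; apply/eqP; apply/negP => /negP nij.
have : rho i != rho j by apply: contra nij => /eqP /perm_inj ->.
rewrite neq_ltn => /orP[] hl.
  by have := Lg_mono hl; lra.
by have := Lg_mono hl; lra.
Qed.

Definition S (k : nat) : R := \sum_(j < n | (rho j < k)%N) a j.

Lemma S0 : S 0 = 0.
Proof. by rewrite /S big_pred0. Qed.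

Lemma Sn : S n = 1.
Proof. by rewrite /S -hsum; apply: eq_bigl => j; rewrite ltn_ord. Qed.

Lemma SS k (hk : (k < n)%N) :
  S k.+1 = S k + a ((rho^-1)%g (Ordinal hk)) /\ Lg ((rho^-1)%g (Ordinal hk)) = S k.
Proof.
set i0 := (rho^-1)%g (Ordinal hk).
have ri0 : rho i0 = Ordinal hk by rewrite /i0 permKV.
split; last by rewrite /Lg /S ri0.
have hi0 : (rho i0 < k.+1)%N by rewrite ri0.
rewrite /S (bigD1 i0 hi0) /= addrC; congr (_ + _); apply: eq_bigl => j.
case: (eqVneq j i0) => [->|nj]; first by rewrite ri0 /= ltnn andbF.
rewrite andbT ltnS leq_eqVlt; case: eqP => //= e.
have : rho j = rho i0 by apply: val_inj; rewrite ri0.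
by move/perm_inj => ej; move: nj; rewrite ej eqxx.
Qed.

Lemma Lg_ex z : 0 <= z < 1 -> exists i, Lg i <= z < Lg i + a i.
Proof.
move=> /andP[z0 z1]; apply: NNPP => hn.
have : forall k, (k <= n)%N -> S k <= z.
  elim=> [|k IH] hk; first by rewrite S0.
  have [e1 e2] := SS hk.
  have := IH (ltnW hk); rewrite e1 -e2 => h.
  case: (leP (Lg ((rho^-1)%g (Ordinal hk)) + a ((rho^-1)%g (Ordinal hk))) z) => // h'.
  by exfalso; apply: hn; eexists; apply/andP; split; [exact: h | exact: h'].
by move/(_ n (leqnn n)); rewrite Sn; lra.
Qed.

Lemma Lg_exd z : 0 < z <= 1 -> exists i, Lg i < z <= Lg i + a i.
Proof.
move=> /andP[z0 z1]; apply: NNPP => hn.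
have : forall k, (k <= n)%N -> S k < z.
  elim=> [|k IH] hk; first by rewrite S0.
  have [e1 e2] := SS hk.
  have := IH (ltnW hk); rewrite e1 -e2 => h.
  case: (ltP (Lg ((rho^-1)%g (Ordinal hk)) + a ((rho^-1)%g (Ordinal hk))) z) => // h'.
  by exfalso; apply: hn; eexists; apply/andP; split; [exact: h | exact: h'].
by move/(_ n (leqnn n)); rewrite Sn; lra.
Qed.
End Part.


Section IETfacts.
Variables (R : realType) (n : nat) (a : 'I_n -> R) (tau : 'S_n).
Hypothesis ha : forall i, 0 < a i.
Hypothesis hsum : \sum_(i < n) a i = 1.

Lemma lo_Lg i : lo a i = Lg a 1%g i.
Proof. by apply: eq_bigl => j; rewrite !perm1. Qed.
Lemma lot_Lg i : lot a tau i = Lg a tau i.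
Proof. by []. Qed.

Definition PT i z := (lo a i <= z) && (z < hi a i).
Definition PTi i z := (lot a tau i <= z) && (z < hit a tau i).
Definition PTd i z := (lo a i < z) && (z <= hi a i).
Definition PTdi i z := (lot a tau i < z) && (z <= hit a tau i).

Lemma PT_uniq i j z : PT i z -> PT j z -> i = j.
Proof. rewrite /PT /hi !lo_Lg; exact: (Lg_uniq ha). Qed.
Lemma PTi_uniq i j z : PTi i z -> PTi j z -> i = j.
Proof. rewrite /PTi /hit !lot_Lg; exact: (Lg_uniq ha). Qed.
Lemma PTd_uniq i j z : PTd i z -> PTd j z -> i = j.
Proof. rewrite /PTd /hi !lo_Lg; exact: (Lg_uniqd ha). Qed.
Lemma PTdi_uniq i j z : PTdi i z -> PTdi j z -> i = j.
Proof. rewrite /PTdi /hit !lot_Lg; exact: (Lg_uniqd ha). Qed.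

Lemma PT_ex z : 0 <= z < 1 -> exists i, PT i z.
Proof.
move=> hz; have [i hh] := Lg_ex 1%g hsum hz; exists i.
by rewrite /PT /hi lo_Lg.
Qed.
Lemma PTi_ex z : 0 <= z < 1 -> exists i, PTi i z.
Proof.
move=> hz; have [i hh] := Lg_ex tau hsum hz; exists i.
by rewrite /PTi /hit lot_Lg.
Qed.
Lemma PTd_ex z : 0 < z <= 1 -> exists i, PTd i z.
Proof.
move=> hz; have [i hh] := Lg_exd 1%g hsum hz; exists i.
by rewrite /PTd /hi lo_Lg.
Qed.
Lemma PTdi_ex z : 0 < z <= 1 -> exists i, PTdi i z.
Proof.
move=> hz; have [i hh] := Lg_exd tau hsum hz; exists i.
by rewrite /PTdi /hit lot_Lg.
Qed.

Lemma lo_ge0 i : 0 <= lo a i. Proof. rewrite lo_Lg; exact: Lg_ge0. Qed.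
Lemma lot_ge0 i : 0 <= lot a tau i. Proof. rewrite lot_Lg; exact: Lg_ge0. Qed.
Lemma hi_le1 i : hi a i <= 1. Proof. rewrite /hi lo_Lg; exact: Lg_top. Qed.
Lemma hit_le1 i : hit a tau i <= 1. Proof. rewrite /hit lot_Lg; exact: Lg_top. Qed.

Lemma PT_b i z : PT i z -> 0 <= z < 1.
Proof. by rewrite /PT => /andP[h1 h2]; have := lo_ge0 i; have := hi_le1 i; lra. Qed.
Lemma PTi_b i z : PTi i z -> 0 <= z < 1.
Proof. by rewrite /PTi => /andP[h1 h2]; have := lot_ge0 i; have := hit_le1 i; lra. Qed.
Lemma PTd_b i z : PTd i z -> 0 < z <= 1.
Proof. by rewrite /PTd => /andP[h1 h2]; have := lo_ge0 i; have := hi_le1 i; lra. Qed.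
Lemma PTdi_b i z : PTdi i z -> 0 < z <= 1.
Proof. by rewrite /PTdi => /andP[h1 h2]; have := lot_ge0 i; have := hit_le1 i; lra. Qed.

Lemma T_def i z : PT i z -> T a tau z = z - lo a i + lot a tau i.
Proof.
move=> hz; rewrite /T; case: pickP => [j hj|hn]; first by rewrite (PT_uniq hj hz).
by move: (hn i); rewrite -[_ && _]/(PT i z) hz.
Qed.
Lemma Tinv_def i z : PTi i z -> Tinv a tau z = z - lot a tau i + lo a i.
Proof.
move=> hz; rewrite /Tinv; case: pickP => [j hj|hn]; first by rewrite (PTi_uniq hj hz).
by move: (hn i); rewrite -[_ && _]/(PTi i z) hz.
Qed.
Lemma Td_def i z : PTd i z -> Td a tau z = z - lo a i + lot a tau i.
Proof.
move=> hz; rewrite /Td; case: pickP => [j hj|hn]; first by rewrite (PTd_uniq hj hz).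
by move: (hn i); rewrite -[_ && _]/(PTd i z) hz.
Qed.
Lemma Tdinv_def i z : PTdi i z -> Tdinv a tau z = z - lot a tau i + lo a i.
Proof.
move=> hz; rewrite /Tdinv; case: pickP => [j hj|hn]; first by rewrite (PTdi_uniq hj hz).
by move: (hn i); rewrite -[_ && _]/(PTdi i z) hz.
Qed.

Lemma T_PTi i z : PT i z -> PTi i (T a tau z).
Proof. move=> hz; rewrite (T_def hz); move: hz; rewrite /PT /PTi /hi /hit => /andP[h1 h2]; apply/andP; split; lra. Qed.
Lemma Tinv_PT i z : PTi i z -> PT i (Tinv a tau z).
Proof. move=> hz; rewrite (Tinv_def hz); move: hz; rewrite /PT /PTi /hi /hit => /andP[h1 h2]; apply/andP; split; lra. Qed.
Lemma Td_PTdi i z : PTd i z -> PTdi i (Td a tau z).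
Proof. move=> hz; rewrite (Td_def hz); move: hz; rewrite /PTd /PTdi /hi /hit => /andP[h1 h2]; apply/andP; split; lra. Qed.
Lemma Tdinv_PTd i z : PTdi i z -> PTd i (Tdinv a tau z).
Proof. move=> hz; rewrite (Tdinv_def hz); move: hz; rewrite /PTd /PTdi /hi /hit => /andP[h1 h2]; apply/andP; split; lra. Qed.

Lemma TinvT z : 0 <= z < 1 -> Tinv a tau (T a tau z) = z.
Proof. move=> /PT_ex [i hi]; rewrite (Tinv_def (T_PTi hi)) (T_def hi); lra. Qed.
Lemma TTinv z : 0 <= z < 1 -> T a tau (Tinv a tau z) = z.
Proof. move=> /PTi_ex [i hi]; rewrite (T_def (Tinv_PT hi)) (Tinv_def hi); lra. Qed.
Lemma TdinvTd z : 0 < z <= 1 -> Tdinv a tau (Td a tau z) = z.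
Proof. move=> /PTd_ex [i hi]; rewrite (Tdinv_def (Td_PTdi hi)) (Td_def hi); lra. Qed.
Lemma TdTdinv z : 0 < z <= 1 -> Td a tau (Tdinv a tau z) = z.
Proof. move=> /PTdi_ex [i hi]; rewrite (Td_def (Tdinv_PTd hi)) (Tdinv_def hi); lra. Qed.

Lemma T_b z : 0 <= z < 1 -> 0 <= T a tau z < 1.
Proof. by move=> /PT_ex [i hi]; apply: (@PTi_b i); apply: T_PTi. Qed.
Lemma Tinv_b z : 0 <= z < 1 -> 0 <= Tinv a tau z < 1.
Proof. by move=> /PTi_ex [i hi]; apply: (@PT_b i); apply: Tinv_PT. Qed.
Lemma Td_b z : 0 < z <= 1 -> 0 < Td a tau z <= 1.
Proof. by move=> /PTd_ex [i hi]; apply: (@PTdi_b i); apply: Td_PTdi. Qed.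
Lemma Tdinv_b z : 0 < z <= 1 -> 0 < Tdinv a tau z <= 1.
Proof. by move=> /PTdi_ex [i hi]; apply: (@PTd_b i); apply: Tdinv_PTd. Qed.

Lemma iter_b (f : R -> R) (D : R -> bool) : (forall z, D z -> D (f z)) ->
  forall m z, D z -> D (iter m f z).
Proof. by move=> h; elim=> //= m IH z hz; apply: h; apply: IH. Qed.

Lemma iter_cancel (f g : R -> R) (D : R -> bool) : (forall z, D z -> D (f z)) ->
  (forall z, D z -> g (f z) = z) -> forall m z, D z -> iter m g (iter m f z) = z.
Proof.
move=> hD hc; elim=> // m IH z hz.
by rewrite iterSr iterS hc ?IH //; apply: iter_b.
Qed.

Definition D01 (z : R) := (0 <= z < 1).
Definition D01d (z : R) := (0 < z <= 1).

Lemma TinvT_iter m z : 0 <= z < 1 -> iter m (Tinv a tau) (iter m (T a tau) z) = z.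
Proof. by apply: (@iter_cancel _ _ D01) => w; [apply: T_b | apply: TinvT]. Qed.
Lemma TTinv_iter m z : 0 <= z < 1 -> iter m (T a tau) (iter m (Tinv a tau) z) = z.
Proof. by apply: (@iter_cancel _ _ D01) => w; [apply: Tinv_b | apply: TTinv]. Qed.
Lemma TdinvTd_iter m z : 0 < z <= 1 -> iter m (Tdinv a tau) (iter m (Td a tau) z) = z.
Proof. by apply: (@iter_cancel _ _ D01d) => w; [apply: Td_b | apply: TdinvTd]. Qed.
Lemma TdTdinv_iter m z : 0 < z <= 1 -> iter m (Td a tau) (iter m (Tdinv a tau) z) = z.
Proof. by apply: (@iter_cancel _ _ D01d) => w; [apply: Tdinv_b | apply: TdTdinv]. Qed.

Lemma T_iter_b m z : 0 <= z < 1 -> 0 <= iter m (T a tau) z < 1.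
Proof. by apply: (@iter_b _ D01) => w; apply: T_b. Qed.
Lemma Tinv_iter_b m z : 0 <= z < 1 -> 0 <= iter m (Tinv a tau) z < 1.
Proof. by apply: (@iter_b _ D01) => w; apply: Tinv_b. Qed.
Lemma Td_iter_b m z : 0 < z <= 1 -> 0 < iter m (Td a tau) z <= 1.
Proof. by apply: (@iter_b _ D01d) => w; apply: Td_b. Qed.
Lemma Tdinv_iter_b m z : 0 < z <= 1 -> 0 < iter m (Tdinv a tau) z <= 1.
Proof. by apply: (@iter_b _ D01d) => w; apply: Tdinv_b. Qed.

Lemma Tk_b k z : 0 <= z < 1 -> 0 <= Tk a tau k z < 1.
Proof. by case: k => m hz; rewrite /Tk /zpow; [apply: T_iter_b | apply: Tinv_iter_b]. Qed.
Lemma Tdk_b k z : 0 < z <= 1 -> 0 < Tdk a tau k z <= 1.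
Proof. by case: k => m hz; rewrite /Tdk /zpow; [apply: Td_iter_b | apply: Tdinv_iter_b]. Qed.

Lemma itin_spec d x k : 0 <= x < 1 -> PT (itin a tau d x k) (Tk a tau k x).
Proof.
move=> hx; rewrite /itin; case: pickP => [j hj|hn] //=.
have [i hi] := PT_ex (Tk_b k hx); by move: (hn i); rewrite -[_ && _]/(PT i _) hi.
Qed.
Lemma itin_eq d x k i : 0 <= x < 1 -> PT i (Tk a tau k x) -> itin a tau d x k = i.
Proof. by move=> hx hi; apply: (PT_uniq (itin_spec d k hx) hi). Qed.
Lemma itind_spec d x k : 0 < x <= 1 -> PTd (itind a tau d x k) (Tdk a tau k x).
Proof.
move=> hx; rewrite /itind; case: pickP => [j hj|hn] //=.
have [i hi] := PTd_ex (Tdk_b k hx); by move: (hn i); rewrite -[_ && _]/(PTd i _) hi.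
Qed.

Lemma shiftT i w : 0 <= w < 1 -> PT i (Tinv a tau w) -> PTi i w.
Proof. by move=> hw /T_PTi; rewrite TTinv. Qed.
Lemma shiftTd i w : 0 < w <= 1 -> PTd i (Tdinv a tau w) -> PTdi i w.
Proof. by move=> hw /Td_PTdi; rewrite TdTdinv. Qed.

Lemma PT_conv i p q r : PT i p -> PT i q -> p <= r <= q -> PT i r.
Proof. rewrite /PT => /andP[h1 h2] /andP[h3 h4] /andP[h5 h6]; apply/andP; split; lra. Qed.
Lemma PTi_conv i p q r : PTi i p -> PTi i q -> p <= r <= q -> PTi i r.
Proof. rewrite /PTi => /andP[h1 h2] /andP[h3 h4] /andP[h5 h6]; apply/andP; split; lra. Qed.
Lemma PTd_conv i p q r : PTd i p -> PTd i q -> p <= r <= q -> PTd i r.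
Proof. rewrite /PTd => /andP[h1 h2] /andP[h3 h4] /andP[h5 h6]; apply/andP; split; lra. Qed.
Lemma PTdi_conv i p q r : PTdi i p -> PTdi i q -> p <= r <= q -> PTdi i r.
Proof. rewrite /PTdi => /andP[h1 h2] /andP[h3 h4] /andP[h5 h6]; apply/andP; split; lra. Qed.

Lemma PT_tr i z : PT i z -> T a tau z = z + (lot a tau i - lo a i).
Proof. by move/T_def ->; lra. Qed.
Lemma PTi_tr i z : PTi i z -> Tinv a tau z = z + (lo a i - lot a tau i).
Proof. by move/Tinv_def ->; lra. Qed.
Lemma PTd_tr i z : PTd i z -> Td a tau z = z + (lot a tau i - lo a i).
Proof. by move/Td_def ->; lra. Qed.
Lemma PTdi_tr i z : PTdi i z -> Tdinv a tau z = z + (lo a i - lot a tau i).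
Proof. by move/Tdinv_def ->; lra. Qed.

Lemma PT_b' i z : PT i z -> 0 <= z <= 1.
Proof. by move/PT_b => /andP[h1 h2]; apply/andP; split; lra. Qed.
Lemma PTi_b' i z : PTi i z -> 0 <= z <= 1.
Proof. by move/PTi_b => /andP[h1 h2]; apply/andP; split; lra. Qed.
Lemma PTd_b' i z : PTd i z -> 0 <= z <= 1.
Proof. by move/PTd_b => /andP[h1 h2]; apply/andP; split; lra. Qed.
Lemma PTdi_b' i z : PTdi i z -> 0 <= z <= 1.
Proof. by move/PTdi_b => /andP[h1 h2]; apply/andP; split; lra. Qed.

End IETfacts.


Section Main1.
Variables (R : realType) (n : nat) (a : 'I_n -> R) (tau : 'S_n).
Hypothesis ha : forall i, 0 < a i.
Hypothesis hsum : \sum_(i < n) a i = 1.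
Hypothesis hnp : no_periodic a tau.

Lemma samei_sym (F : R -> R) (P : 'I_n -> R -> bool) u v : samei F P u v -> samei F P v u.
Proof. by move=> h m; have [i /andP[h1 h2]] := h m; exists i; rewrite h1 h2. Qed.

Lemma noTwo_gen (F : R -> R) (P : 'I_n -> R -> bool) :
  (forall u v, u < v -> samei F P u v -> False) ->
  forall u v, u <> v -> samei F P u v -> False.
Proof.
move=> key u v uv hs; case: (ltgtP u v) => [h|h|h].
- exact: key h hs.
- exact: key h (samei_sym hs).
- exact: uv h.
Qed.

Lemma noTwoT u v : u <> v -> samei (T a tau) (PT a) u v -> False.
Proof.
apply: noTwo_gen => {}u {}v uv hs.
have [j [p [p0 e]]] := core (@PT_conv R n a) (PT_tr tau ha) (PT_b' ha hsum) uv hs.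
have [i /andP[hu _]] := hs 0%N.
have hu' := PT_b ha hsum hu.
apply: (hnp (T_iter_b tau ha hsum j hu') p0).
by rewrite -iterD e.
Qed.

Lemma noTwoTi u v : u <> v -> samei (Tinv a tau) (PTi a tau) u v -> False.
Proof.
apply: noTwo_gen => {}u {}v uv hs.
have [j [p [p0 e]]] := core (@PTi_conv R n a tau) (PTi_tr ha) (PTi_b' ha hsum) uv hs.
have [i /andP[hu _]] := hs 0%N.
have hu' := PTi_b ha hsum hu.
have hy := Tinv_iter_b tau ha hsum j hu'.
apply: (hnp hy p0).
have e' : iter p (Tinv a tau) (iter j (Tinv a tau) u) = iter j (Tinv a tau) u by rewrite -iterD e.
by rewrite -{1}e' TTinv_iter.
Qed.

Lemma noTwoTd u v : u <> v -> samei (Td a tau) (PTd a) u v -> False.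
Proof.
apply: noTwo_gen => {}u {}v uv hs.
have gint : forall i p q r, PTd a i p -> PTd a i q -> p < r < q -> T a tau r = Td a tau r.
  move=> i p q r; rewrite /PTd => /andP[h1 h2] /andP[h3 h4] /andP[h5 h6].
  rewrite (T_def tau ha (i:=i)) ?(Td_def tau ha (i:=i)) //.
    by apply/andP; split; lra.
  by rewrite /PT; apply/andP; split; lra.
have [y [p [p0 [e [j hj]]]]] := core_int (@PTd_conv R n a) (PTd_tr tau ha) (PTd_b' ha hsum) gint uv hs.
have [i /andP[hu hv]] := hs j.
have := PTd_b ha hsum hu; have := PTd_b ha hsum hv => hb1 hb2.
have hy : 0 <= y < 1 by move: hj => /andP[h1 h2]; move: hb1 hb2 => /andP[h3 h4] /andP[h5 h6]; apply/andP; split; lra.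
exact: (hnp hy p0 e).
Qed.

Lemma noTwoTdi u v : u <> v -> samei (Tdinv a tau) (PTdi a tau) u v -> False.
Proof.
apply: noTwo_gen => {}u {}v uv hs.
have gint : forall i p q r, PTdi a tau i p -> PTdi a tau i q -> p < r < q -> Tinv a tau r = Tdinv a tau r.
  move=> i p q r; rewrite /PTdi => /andP[h1 h2] /andP[h3 h4] /andP[h5 h6].
  rewrite (Tinv_def ha (i:=i)) ?(Tdinv_def ha (i:=i)) //.
    by apply/andP; split; lra.
  by rewrite /PTi; apply/andP; split; lra.
have [y [p [p0 [e [j hj]]]]] := core_int (@PTdi_conv R n a tau) (PTdi_tr ha) (PTdi_b' ha hsum) gint uv hs.
have [i /andP[hu hv]] := hs j.
have := PTdi_b ha hsum hu; have := PTdi_b ha hsum hv => hb1 hb2.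
have hy : 0 <= y < 1 by move: hj => /andP[h1 h2]; move: hb1 hb2 => /andP[h3 h4] /andP[h5 h6]; apply/andP; split; lra.
apply: (hnp hy p0).
by rewrite -{1}e TTinv_iter.
Qed.

Lemma negz_le (m N : nat) : Negz (m + N) <= - (N%:Z).
Proof. by rewrite NegzE lerN2 lez_nat -addSn leq_addl. Qed.

Lemma part1 d x y : 0 <= x < 1 -> 0 <= y < 1 -> x <> y ->
  ~ pos_asympt (itin a tau d x) (itin a tau d y) /\
  ~ neg_asympt (itin a tau d x) (itin a tau d y).
Proof.
move=> hx hy xy; split.
- move=> [N hN].
  apply: (@noTwoT (iter N (T a tau) x) (iter N (T a tau) y)).
    move=> e; apply: xy.
    by rewrite -(TinvT_iter tau ha hsum N hx) -(TinvT_iter tau ha hsum N hy) e.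
  move=> m; exists (itin a tau d x (m + N)%N).
  have hk : N%:Z <= (m + N)%N%:Z by rewrite lez_nat leq_addl.
  have h1 := itin_spec tau ha hsum d (m + N)%N hx.
  have h2 := itin_spec tau ha hsum d (m + N)%N hy.
  rewrite -(hN _ hk) in h2.
  by rewrite -!iterD h1 h2.
- move=> [N hN].
  apply: (@noTwoTi (iter N (Tinv a tau) x) (iter N (Tinv a tau) y)).
    move=> e; apply: xy.
    by rewrite -(TTinv_iter tau ha hsum N hx) -(TTinv_iter tau ha hsum N hy) e.
  move=> m; exists (itin a tau d x (Negz (m + N))).
  have h1 := itin_spec tau ha hsum d (Negz (m + N)) hx.
  have h2 := itin_spec tau ha hsum d (Negz (m + N)) hy.
  rewrite -(hN _ (negz_le m N)) in h2.
  move: h1 h2; rewrite /Tk /zpow !iterS !iterD => h1 h2.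
  have hw : forall z, 0 <= z < 1 -> 0 <= iter m (Tinv a tau) (iter N (Tinv a tau) z) < 1 by move=> z hz; exact: (Tinv_iter_b tau ha hsum m (Tinv_iter_b tau ha hsum N hz)).
  by rewrite (shiftT ha hsum (hw x hx) h1) (shiftT ha hsum (hw y hy) h2).
Qed.

Lemma part2 d x y : 0 < x <= 1 -> 0 < y <= 1 -> x <> y ->
  ~ pos_asympt (itind a tau d x) (itind a tau d y) /\
  ~ neg_asympt (itind a tau d x) (itind a tau d y).
Proof.
move=> hx hy xy; split.
- move=> [N hN].
  apply: (@noTwoTd (iter N (Td a tau) x) (iter N (Td a tau) y)).
    move=> e; apply: xy.
    by rewrite -(TdinvTd_iter tau ha hsum N hx) -(TdinvTd_iter tau ha hsum N hy) e.
  move=> m; exists (itind a tau d x (m + N)%N).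
  have hk : N%:Z <= (m + N)%N%:Z by rewrite lez_nat leq_addl.
  have h1 := itind_spec tau ha hsum d (m + N)%N hx.
  have h2 := itind_spec tau ha hsum d (m + N)%N hy.
  rewrite -(hN _ hk) in h2.
  by rewrite -!iterD h1 h2.
- move=> [N hN].
  apply: (@noTwoTdi (iter N (Tdinv a tau) x) (iter N (Tdinv a tau) y)).
    move=> e; apply: xy.
    by rewrite -(TdTdinv_iter tau ha hsum N hx) -(TdTdinv_iter tau ha hsum N hy) e.
  move=> m; exists (itind a tau d x (Negz (m + N))).
  have h1 := itind_spec tau ha hsum d (Negz (m + N)) hx.
  have h2 := itind_spec tau ha hsum d (Negz (m + N)) hy.
  rewrite -(hN _ (negz_le m N)) in h2.
  move: h1 h2; rewrite /Tdk /zpow !iterS !iterD => h1 h2.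
  have hw : forall z, 0 < z <= 1 -> 0 < iter m (Tdinv a tau) (iter N (Tdinv a tau) z) <= 1 by move=> z hz; exact: (Tdinv_iter_b tau ha hsum m (Tdinv_iter_b tau ha hsum N hz)).
  by rewrite (shiftTd ha hsum (hw x hx) h1) (shiftTd ha hsum (hw y hy) h2).
Qed.

Lemma part4 d x y : 0 <= x < 1 -> 0 <= y < 1 -> itin a tau d x = itin a tau d y -> x = y.
Proof.
move=> hx hy e; case: (eqVneq x y) => // /eqP xy; exfalso.
have [h _] := part1 d hx hy xy; apply: h; exists 0%N => i _; by rewrite e.
Qed.
Lemma part5 d x y : 0 < x <= 1 -> 0 < y <= 1 -> itind a tau d x = itind a tau d y -> x = y.
Proof.
move=> hx hy e; case: (eqVneq x y) => // /eqP xy; exfalso.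
have [h _] := part2 d hx hy xy; apply: h; exists 0%N => i _; by rewrite e.
Qed.
End Main1.


Section Main2.
Variables (R : realType) (n : nat) (a : 'I_n -> R) (tau : 'S_n).
Hypothesis ha : forall i, 0 < a i.
Hypothesis hsum : \sum_(i < n) a i = 1.
Hypothesis hnp : no_periodic a tau.

Local Notation T := (T a tau).
Local Notation Tinv := (Tinv a tau).
Local Notation lo := (lo a).
Local Notation lot := (lot a tau).

Definition OD (z : R) := exists (k : int) (i : 'I_n), (0 < i)%N /\ z = Tk a tau k (lo i).

Lemma lo_in i : PT a i (lo i).
Proof. by rewrite /PT /hi lexx /= ltrDl. Qed.
Lemma lo_b i : 0 <= lo i < 1.
Proof. exact: (PT_b ha hsum (lo_in i)). Qed.

Lemma OD_T z : OD z -> OD (T z).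
Proof.
move=> [k [i [i0 ->]]]; have hy := lo_b i.
case: k => [m|[|m]].
- by exists (Posz m.+1), i.
- exists (Posz 0), i; split => //; rewrite /Tk /zpow /=.
  exact: (TTinv tau ha hsum hy).
- exists (Negz m), i; split => //; rewrite /Tk /zpow [in LHS]iterS.
  by rewrite (TTinv tau ha hsum (Tinv_iter_b tau ha hsum _ hy)).
Qed.

Lemma OD_Tinv z : OD z -> OD (Tinv z).
Proof.
move=> [k [i [i0 ->]]]; have hy := lo_b i.
case: k => [[|m]|m].
- by exists (Negz 0), i.
- exists (Posz m), i; split => //; rewrite /Tk /zpow [in LHS]iterS.
  by rewrite (TinvT tau ha hsum (T_iter_b tau ha hsum _ hy)).
- by exists (Negz m.+1), i.
Qed.

Definition Good (z : R) := 0 <= z < 1 /\ ~ OD z.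

Lemma Good_T z : Good z -> Good (T z).
Proof.
move=> [hz nz]; split; first exact: (T_b tau ha hsum hz).
by move/OD_Tinv; rewrite (TinvT tau ha hsum hz).
Qed.
Lemma Good_Tinv z : Good z -> Good (Tinv z).
Proof.
move=> [hz nz]; split; first exact: (Tinv_b tau ha hsum hz).
by move/OD_T; rewrite (TTinv tau ha hsum hz).
Qed.
Lemma Good_iterT m z : Good z -> Good (iter m T z).
Proof. by elim: m => //= m IH hz; apply: Good_T; apply: IH. Qed.
Lemma Good_iterTinv m z : Good z -> Good (iter m Tinv z).
Proof. by elim: m => //= m IH hz; apply: Good_Tinv; apply: IH. Qed.

Lemma OD_lo i : OD (lo i).
Proof.
case: (posnP i) => [i0|i0]; last by exists 0, i.
have lo0 : lo i = 0 by rewrite /Defs.lo big_pred0 // => j; rewrite i0 ltn0.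
set i1 := (tau^-1)%g i.
have ti1 : tau i1 = i by rewrite /i1 permKV.
have lot0 : lot i1 = 0 by rewrite /Defs.lot big_pred0 // => j; rewrite ti1 i0 ltn0.
have Te : T (lo i1) = lot i1 by rewrite (T_def tau ha (lo_in i1)); lra.
case: (posnP i1) => [i10|i10].
  have ei : i1 = i by apply: val_inj; rewrite /= i10 i0.
  exfalso; apply: (hnp (x := 0) _ (k := 1)) => //; first by apply/andP; split; lra.
  by rewrite /= -lo0 -{1}ei Te lot0 lo0.
have := OD_T (ex_intro _ 0 (ex_intro _ i1 (conj i10 erefl))).
by rewrite /Tk /zpow /= Te lot0 lo0.
Qed.

Lemma OD_lot i : OD (lot i).
Proof. by have := OD_T (OD_lo i); rewrite (T_def tau ha (lo_in i)); rewrite addrN add0r. Qed.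

Lemma Good_nlo z i : Good z -> z <> lo i.
Proof. by move=> [_ h] e; apply: h; rewrite e; apply: OD_lo. Qed.
Lemma Good_nlot z i : Good z -> z <> lot i.
Proof. by move=> [_ h] e; apply: h; rewrite e; apply: OD_lot. Qed.

Lemma int_nbhd (l h w : R) : l < w < h ->
  exists d, 0 < d /\ forall r, w - d < r < w + d -> l < r < h.
Proof.
move=> /andP[h1 h2]; exists (Num.min (w - l) (h - w)); split.
  by rewrite lt_min; apply/andP; split; lra.
have m1 : Num.min (w - l) (h - w) <= w - l by rewrite ge_min lexx.
have m2 : Num.min (w - l) (h - w) <= h - w by rewrite ge_min lexx orbT.
by move=> r /andP[h3 h4]; apply/andP; split; lra.
Qed.

Lemma hint_PT w : Good w ->
  exists i d, 0 < d /\ forall r, w - d < r < w + d -> PT a i r.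
Proof.
move=> hw; have [i hi] := PT_ex hsum (proj1 hw).
have hne := Good_nlo (i:=i) hw.
move: hi; rewrite /PT => /andP[h1 h2].
have [d [d0 hd]] := @int_nbhd (lo i) (hi a i) w (ltac:(apply/andP; split => //; rewrite lt_neqAle h1 andbT; apply/eqP => e; exact: hne (esym e))).
exists i, d; split => // r /hd /andP[h3 h4]; apply/andP; split => //; exact: ltW.
Qed.

Lemma hint_PTi w : Good w ->
  exists i d, 0 < d /\ forall r, w - d < r < w + d -> PTi a tau i r.
Proof.
move=> hw; have [i hi] := PTi_ex tau hsum (proj1 hw).
have hne := Good_nlot (i:=i) hw.
move: hi; rewrite /PTi => /andP[h1 h2].
have [d [d0 hd]] := @int_nbhd (lot i) (hit a tau i) w (ltac:(apply/andP; split => //; rewrite lt_neqAle h1 andbT; apply/eqP => e; exact: hne (esym e))).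
exists i, d; split => // r /hd /andP[h3 h4]; apply/andP; split => //; exact: ltW.
Qed.

Lemma contT u : Good u -> forall m, exists d, 0 < d /\
  forall w, u - d < w < u + d -> iter m T w = iter m T u + (w - u).
Proof.
move=> hu; apply: (contin (PT_tr tau ha)) => m.
exact: hint_PT (Good_iterT m hu).
Qed.
Lemma contTi u : Good u -> forall m, exists d, 0 < d /\
  forall w, u - d < w < u + d -> iter m Tinv w = iter m Tinv u + (w - u).
Proof.
move=> hu; apply: (contin (PTi_tr ha)) => m.
exact: hint_PTi (Good_iterTinv m hu).
Qed.

Lemma letter_cont d x k0 : Good x -> exists e, 0 < e /\
  forall z, 0 <= z < 1 -> x - e < z < x + e -> itin a tau d z k0 = itin a tau d x k0.
Proof.
move=> hx.
have [F [hF hw]] : exists F : R -> R, (forall z, Tk a tau k0 z = F z) /\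
   exists d1, 0 < d1 /\ forall w, x - d1 < w < x + d1 -> F w = F x + (w - x) /\ Good (F x).
  case: k0 => m.
  - exists (iter m T); split => // ; have [d1 [d10 h]] := contT hx m.
    by exists d1; split => // w hw; split; [exact: h | exact: Good_iterT].
  - exists (iter m.+1 Tinv); split => //; have [d1 [d10 h]] := contTi hx m.+1.
    by exists d1; split => // w hw; split; [exact: h | exact: Good_iterTinv].
have [d1 [d10 h1]] := hw.
have gF : Good (F x) by have := h1 x (ltac:(apply/andP; split; lra)) => -[].
have [i [d2 [d20 h2]]] := hint_PT gF.
exists (Num.min d1 d2); split; first by rewrite lt_min d10 d20.
have m1 : Num.min d1 d2 <= d1 by rewrite ge_min lexx.
have m2 : Num.min d1 d2 <= d2 by rewrite ge_min lexx orbT.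
move=> z hz /andP[hz1 hz2].
have [e1 _] := h1 z (ltac:(apply/andP; split; lra)).
rewrite (itin_eq ha hsum d hz (i := i)); last first.
  by rewrite hF e1; apply: h2; apply/andP; split; lra.
symmetry; apply: (itin_eq ha hsum d (proj1 hx)).
by rewrite hF; apply: h2; apply/andP; split; lra.
Qed.

End Main2.


Section Main3.
Variables (R : realType) (n : nat) (a : 'I_n -> R) (tau : 'S_n).
Hypothesis ha : forall i, 0 < a i.
Hypothesis hsum : \sum_(i < n) a i = 1.
Hypothesis hnp : no_periodic a tau.

Lemma Rgood_b z : Rgood a tau z -> 0 <= z < 1.
Proof.
move=> [/andP[h1 h2] hd]; apply/andP; split => //.
rewrite lt_neqAle h2 andbT; apply/eqP => e; apply: hd; by right; left.
Qed.
Lemma Rgood_Good z : Rgood a tau z -> Good a tau z.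
Proof.
move=> hz; split; first exact: Rgood_b.
by move=> h; case: hz => _ hd; apply: hd; right; right.
Qed.

Lemma part3 d al be : X a tau d al -> X a tau d be -> X0 a tau d al -> al <> be ->
  ~ pos_asympt al be /\ ~ neg_asympt al be.
Proof.
move=> _ hXb [x [hx ->]] ne.
have [k0 hk0] : exists k0, itin a tau d x k0 <> be k0.
  apply: NNPP => h; apply: ne; apply: functional_extensionality => k.
  by apply: NNPP => h'; apply: h; exists k.
have gx := Rgood_Good hx.
have hx01 := Rgood_b hx.
have [ec [ec0 hc]] := letter_cont ha hsum hnp d k0 gx.
split.
- move=> [N hN].
  set u := iter N (T a tau) x.
  have gu : Good a tau u := Good_iterT ha hsum N gx.
  have [db [db0 hb]] := contTi ha hsum hnp gu N.
  have ux : iter N (Tinv a tau) u = x by rewrite /u TinvT_iter.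
  have e0 : 0 < Num.min db ec by rewrite lt_min db0 ec0.
  have m1 : Num.min db ec <= db by rewrite ge_min lexx.
  have m2 : Num.min db ec <= ec by rewrite ge_min lexx orbT.
  have np : forall w, w <> u -> samei (T a tau) (PT a) w u -> False.
    by move=> w hw hs; exact: (noTwoT ha hsum hnp hw hs).
  have [K hK] := shrink (@PT_conv R n a) (PT_tr tau ha) (u := u) e0 np.
  have [z [hz hbz]] := hXb (maxn (absz k0) (K + N)).
  have hz01 := Rgood_b hz.
  set w := iter N (T a tau) z.
  have hs : same (T a tau) (PT a) K w u.
    move=> m hm; exists (itin a tau d x (m + N)%N).
    have hk : N%:Z <= (m + N)%N%:Z by rewrite lez_nat leq_addl.
    have h1 := itin_spec tau ha hsum d (m + N)%N hx01.
    have h2 := itin_spec tau ha hsum d (m + N)%N hz01.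
    rewrite -hbz in h2; last by apply: leq_trans (leq_maxr _ _); rewrite /= leq_add2r.
    rewrite -(hN _ hk) in h2.
    by rewrite /w /u -!iterD h1 h2.
  have /andP[hw1 hw2] := hK w hs.
  have zx : z = x + (w - u).
    rewrite -{1}(TinvT_iter tau ha hsum N hz01) -/w hb ?ux //; apply/andP; split; lra.
  apply: hk0; rewrite hbz ?leq_maxl //; symmetry; apply: hc => //.
  by rewrite zx; apply/andP; split; lra.
- move=> [N hN].
  set u := iter N (Tinv a tau) x.
  have gu : Good a tau u := Good_iterTinv ha hsum N gx.
  have [db [db0 hb]] := contT ha hsum hnp gu N.
  have ux : iter N (T a tau) u = x by rewrite /u TTinv_iter.
  have e0 : 0 < Num.min db ec by rewrite lt_min db0 ec0.
  have m1 : Num.min db ec <= db by rewrite ge_min lexx.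
  have m2 : Num.min db ec <= ec by rewrite ge_min lexx orbT.
  have np : forall w, w <> u -> samei (Tinv a tau) (PTi a tau) w u -> False.
    by move=> w hw hs; exact: (noTwoTi ha hsum hnp hw hs).
  have [K hK] := shrink (@PTi_conv R n a tau) (PTi_tr ha) (u := u) e0 np.
  have [z [hz hbz]] := hXb (maxn (absz k0) (K + N).+1).
  have hz01 := Rgood_b hz.
  set w := iter N (Tinv a tau) z.
  have hs : same (Tinv a tau) (PTi a tau) K w u.
    move=> m hm; exists (itin a tau d x (Negz (m + N))).
    have h1 := itin_spec tau ha hsum d (Negz (m + N)) hx01.
    have h2 := itin_spec tau ha hsum d (Negz (m + N)) hz01.
    rewrite -hbz in h2; last by apply: leq_trans (leq_maxr _ _); rewrite /= ltnS leq_add2r.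
    rewrite -(hN _ (negz_le m N)) in h2.
    move: h1 h2; rewrite /Tk /zpow !iterS !iterD => h1 h2.
    have hw' : forall y, 0 <= y < 1 -> 0 <= iter m (Tinv a tau) (iter N (Tinv a tau) y) < 1.
      by move=> y hy; exact: (Tinv_iter_b tau ha hsum m (Tinv_iter_b tau ha hsum N hy)).
    by rewrite (shiftT ha hsum (hw' z hz01) h2) (shiftT ha hsum (hw' x hx01) h1).
  have /andP[hw1 hw2] := hK w hs.
  have zx : z = x + (w - u).
    rewrite -{1}(TTinv_iter tau ha hsum N hz01) -/w hb ?ux //; apply/andP; split; lra.
  apply: hk0; rewrite hbz ?leq_maxl //; symmetry; apply: hc => //.
  by rewrite zx; apply/andP; split; lra.
Qed.
End Main3.


Theorem theorem4p4 (R : realType) (n : nat) (hn : (2 <= n)%N)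
  (a : 'I_n -> R) (tau : 'S_n)
  (ha : forall i, 0 < a i) (hsum : \sum_(i < n) a i = 1)
  (hnp : no_periodic a tau) :
  let d : 'I_n := Ordinal (ltnW hn) in
  (forall x y : R, 0 <= x < 1 -> 0 <= y < 1 -> x <> y ->
     ~ pos_asympt (itin a tau d x) (itin a tau d y) /\
     ~ neg_asympt (itin a tau d x) (itin a tau d y)) /\
  (forall x y : R, 0 < x <= 1 -> 0 < y <= 1 -> x <> y ->
     ~ pos_asympt (itind a tau d x) (itind a tau d y) /\
     ~ neg_asympt (itind a tau d x) (itind a tau d y)) /\
  (forall al be : int -> 'I_n, X a tau d al -> X a tau d be ->
     X0 a tau d al -> al <> be ->
     ~ pos_asympt al be /\ ~ neg_asympt al be) /\
  (forall x y : R, 0 <= x < 1 -> 0 <= y < 1 ->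
     itin a tau d x = itin a tau d y -> x = y) /\
  (forall x y : R, 0 < x <= 1 -> 0 < y <= 1 ->
     itind a tau d x = itind a tau d y -> x = y).
Proof.
move=> d; split; [|split; [|split; [|split]]].
- by move=> x y hx hy xy; apply: part1.
- by move=> x y hx hy xy; apply: part2.
- by move=> al be h1 h2 h3 h4; apply: (part3 ha hsum hnp h1 h2 h3 h4).
- by move=> x y hx hy e; apply: (part4 ha hsum hnp hx hy e).
- by move=> x y hx hy e; apply: (part5 ha hsum hnp hx hy e).
Qed.
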